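(* Let $V$ be a simple Yetter-Drinfeld module over $H=B(n,w,\gamma)$ with $\dim_\Bbbk V=p+1$ for some $p\ge0$. For any standard element $v\in V$, the set $\{v,y\cdot v,\dots,y^p\cdot v\}$ is a basis of $V$.
   Context: $\Bbbk$ is an algebraically closed field of characteristic $0$; $n,w$ positive integers, $\gamma$ a primitive $n$-th root of unity. $H=B(n,w,\gamma)$ is the Hopf algebra generated by $x^{\pm1},g,y$ with relations $xx^{-1}=x^{-1}x=1$, $xg=gx$, $xy=yx$, $yg=\gamma gy$, $y^n=1-x^w=1-g^n$, with $\Delta(x)=x\otimes x$, $\Delta(g)=g\otimes g$, $\Delta(y)=y\otimes g+1\otimes y$, $\varepsilon(x)=\varepsilon(g)=1$, $\varepsilon(y)=0$, $S(x)=x^{-1}$, $S(g)=g^{-1}$, $S(y)=-yg^{-1}$; $G(H)=\{g^jx^k\}$. A (left-left) Yetter-Drinfeld module is a left $H$-module, left $H$-comodule $(V,\cdot,\delta)$ with $\delta(h\cdot v)=h_{(1)}v_{(-1)}S(h_{(3)})\otimes h_{(2)}\cdot v_{(0)}$; simple means no nonzero proper Yetter-Drinfeld submodules. A nonzero $v\in V$ is a standard element of type $(\alpha,\beta,h)$ if $h\in G(H)$, $\alpha,\beta\in\Bbbk^*$, $x\cdot v=\alpha v$, $g\cdot v=\beta v$, $\delta(v)=h\otimes v$. *)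

(* Defs.v *)
(* Concrete model of the Hopf algebra B(n,w,gamma) via its
   PBW-type basis y^i g^j x^k (0 <= i,j < n, k : int) and of
   Yetter-Drinfeld modules over it, on V = K^d (column vectors). *)
From HB Require Import structures.
From mathcomp Require Import all_boot all_order all_algebra.
Set Implicit Arguments. Unset Strict Implicit. Unset Printing Implicit Defensive.
Import Order.TTheory GRing.Theory Num.Theory.
Local Open Scope ring_scope.

Section Bnwg.
Variables (K : fieldType) (n w : nat) (gam : K).

(* basis index (i,j,k) stands for the monomial y^i g^j x^k, with i,j < n
   (n is assumed positive, so 'I_(n.-1.+1) = 'I_n). *)
Definition Bidx := ('I_(n.-1.+1) * 'I_(n.-1.+1) * int)%type.

Definition mkB (i j : nat) (k : int) : Bidx := (inord i, inord j, k).

Definition Hel := seq (K * Bidx).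
Definition HHel := seq (K * (Bidx * Bidx)).

(* normal form of y^s g^t x^u for s, t < 2n, using g^n = x^w, y^n = 1 - x^w *)
Definition monoH (s t : nat) (u : int) : Hel :=
  let tu := if (t < n)%N then (t, u) else ((t - n)%N, u + (w%:Z)) in
  if (s < n)%N then [:: (1, mkB s tu.1 tu.2)]
  else [:: (1, mkB (s - n) tu.1 tu.2); (-1, mkB (s - n) tu.1 (tu.2 + w%:Z))].

(* product of basis elements: (y^a g^b x^c)(y^d g^e x^f)
   = gam^(-bd) y^(a+d) g^(b+e) x^(c+f)   (since y g = gam g y) *)
Definition mulB (b b' : Bidx) : Hel :=
  [seq (gam ^- (b.1.2 * b'.1.1)%N * q.1, q.2)
  | q <- monoH (b.1.1 + b'.1.1) (b.1.2 + b'.1.2) (b.2 + b'.2)].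

Definition mulH (p q : Hel) : Hel :=
  flatten [seq [seq (a.1 * c.1 * e.1, e.2) | e <- mulB a.2 c.2] | a <- p, c <- q].

Definition mulHH (p q : HHel) : HHel :=
  flatten [seq flatten [seq [seq (a.1 * c.1 * e1.1 * e2.1, (e1.2, e2.2))
                            | e2 <- mulB a.2.2 c.2.2] | e1 <- mulB a.2.1 c.2.1]
          | a <- p, c <- q].

Definition tensH (p q : Hel) : HHel := [seq (a.1 * c.1, (a.2, c.2)) | a <- p, c <- q].

Definition oneH : Hel := [:: (1, mkB 0 0 0)].
Definition xH : Hel := monoH 0 0 1.
Definition gH : Hel := monoH 0 1 0.
Definition yH : Hel := monoH 1 0 0.

(* comultiplication: Delta(y) = y (x) g + 1 (x) y, g^j x^k grouplike,
   extended multiplicatively *)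
Definition DeltaY : HHel := tensH yH gH ++ tensH oneH yH.
Definition DeltaB (b : Bidx) : HHel :=
  iter b.1.1 (mulHH DeltaY) [:: (1, (mkB 0 b.1.2 b.2, mkB 0 b.1.2 b.2))].

(* (Delta (x) id) Delta, as formal sums in H (x) H (x) H *)
Definition Delta2B (b : Bidx) : seq (K * (Bidx * Bidx * Bidx)) :=
  flatten [seq [seq (c.1 * c'.1, (c'.2.1, c'.2.2, c.2.2)) | c' <- DeltaB c.2.1]
          | c <- DeltaB b].

Definition epsB (b : Bidx) : K := if (b.1.1 == 0 :> nat) then 1 else 0.

(* antipode: S(x) = x^-1, S(g) = g^-1 = g^(n-1) x^(-w), S(y) = - y g^-1,
   S(y^i g^j x^k) = x^-k g^-j S(y)^i *)
Definition SyH : Hel := [seq (- a.1, a.2) | a <- mulH yH [:: (1, mkB 0 (n - 1) (- (w%:Z)))]].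
Definition SB (b : Bidx) : Hel :=
  iter b.1.1 (fun t => mulH t SyH)
    [:: (1, if (b.1.2 == 0 :> nat) then mkB 0 0 (- b.2)
            else mkB 0 (n - b.1.2) (- b.2 - w%:Z))].

Definition coefT (I : eqType) (M : nmodType) (t : seq (I * M)) (b : I) : M :=
  \sum_(e <- t | e.1 == b) e.2.

Variable d : nat.
Notation V := 'cV[K]_d.

Definition actH (A : Bidx -> 'M[K]_d) (h : Hel) (v : V) : V :=
  \sum_(e <- h) e.1 *: (A e.2 *m v).

Definition is_Hmodule (A : Bidx -> 'M[K]_d) : Prop :=
  A (mkB 0 0 0) = (1%:M : 'M[K]_d) /\
  forall b b', A b *m A b' = \sum_(e <- mulB b b') e.1 *: A e.2.

(* a coaction V -> H (x) V, an element of H (x) V being a formal sum *)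
Definition Coact := V -> seq (Bidx * V).

Definition coact_linear (delta : Coact) : Prop :=
  forall (a : K) (u v : V) (b : Bidx),
    coefT (delta (a *: u + v)) b = a *: coefT (delta u) b + coefT (delta v) b.

Definition DeltaId (t : seq (Bidx * V)) : seq ((Bidx * Bidx) * V) :=
  flatten [seq [seq (c.2, c.1 *: e.2) | c <- DeltaB e.1] | e <- t].

Definition IdDelta (delta : Coact) (t : seq (Bidx * V)) : seq ((Bidx * Bidx) * V) :=
  flatten [seq [seq ((e.1, e'.1), e'.2) | e' <- delta e.2] | e <- t].

Definition is_Hcomodule (delta : Coact) : Prop :=
  [/\ coact_linear delta,
      (forall v bb, coefT (DeltaId (delta v)) bb = coefT (IdDelta delta (delta v)) bb)
    & (forall v, \sum_(e <- delta v) epsB e.1 *: e.2 = v)].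

(* h_(1) v_(-1) S(h_(3)) (x) h_(2) . v_(0) *)
Definition YDrhs (A : Bidx -> 'M[K]_d) (delta : Coact) (h : Bidx) (v : V)
    : seq (Bidx * V) :=
  flatten [seq flatten [seq
     [seq (q.2, (c.1 * q.1) *: (A c.2.1.2 *m e.2))
     | q <- mulH (mulH [:: (1, c.2.1.1)] [:: (1, e.1)]) (SB c.2.2)]
     | e <- delta v] | c <- Delta2B h].

Definition is_YD (A : Bidx -> 'M[K]_d) (delta : Coact) : Prop :=
  [/\ is_Hmodule A, is_Hcomodule delta &
      forall (h : Bidx) (v : V) (b : Bidx),
        coefT (delta (A h *m v)) b = coefT (YDrhs A delta h v) b].

Definition is_YDsub (A : Bidx -> 'M[K]_d) (delta : Coact) (U : {vspace V}) : Prop :=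
  (forall (b : Bidx) (u : V), u \in U -> A b *m u \in U) /\
  (forall (u : V) (b : Bidx), u \in U -> coefT (delta u) b \in U).

Definition is_simple_YD (A : Bidx -> 'M[K]_d) (delta : Coact) : Prop :=
  [/\ is_YD A delta, (0 < d)%N &
      forall U : {vspace V}, is_YDsub A delta U -> U = 0%VS \/ U = fullv].

(* standard element of type (alpha, beta, h), h = g^j x^k in G(H) *)
Definition is_standard (A : Bidx -> 'M[K]_d) (delta : Coact) (v : V)
    (alpha beta : K) (h : Bidx) : Prop :=
  [/\ v != 0, alpha != 0 & beta != 0] /\
  [/\ h.1.1 = 0%N :> nat,
      actH A xH v = alpha *: v, actH A gH v = beta *: v &
      forall b, coefT (delta v) b = coefT [:: (h, v)] b].

End Bnwg.

(* Main.v *)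
Require Import Defs.
From HB Require Import structures.
From mathcomp Require Import all_boot all_order all_algebra.
From mathcomp Require Import zify.
Set Implicit Arguments. Unset Strict Implicit. Unset Printing Implicit Defensive.
Import GRing.Theory.
Local Open Scope ring_scope.



Section S2.
Variables (K : fieldType) (I : eqType) (d : nat).

Lemma regroup (t : seq (I * 'cV[K]_d)) (F : I -> K) (M : 'M[K]_d) :
  \sum_(e <- t) F e.1 *: (M *m e.2) =
  \sum_(i <- undup (map fst t)) F i *: (M *m coefT t i).
Proof.
rewrite /coefT.
under [RHS]eq_bigr => i _ do rewrite mulmx_sumr scaler_sumr big_mkcond.
rewrite exchange_big /=; apply: eq_big_seq => e et.
have ein : e.1 \in undup (map fst t) by rewrite mem_undup; apply: map_f.
rewrite (bigD1_seq e.1) ?undup_uniq //= eqxx big1 ?addr0 // => i /negPf hi.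
by rewrite eq_sym hi.
Qed.
End S2.



Section S3.
Variables (K : fieldType) (n w : nat) (gam : K) (d : nat).
Variable A : Bidx n -> 'M[K]_d.
Variable delta : Coact K n d.
Variable X : {vspace 'cV[K]_d}.
Hypothesis hX : forall b u, u \in X -> A b *m u \in X.

Lemma YDrhs_in hb u b : (forall b, coefT (delta u) b \in X) ->
  coefT (YDrhs w gam A delta hb u) b \in X.
Proof.
move=> hu.
rewrite /coefT /YDrhs big_flatten /= big_map; apply: rpred_sum => c _.
rewrite big_flatten big_map.
under eq_bigr => e _ do rewrite big_map -scaler_suml.
rewrite (regroup (delta u) (fun i => \sum_(q <- mulH w gam (mulH w gam [:: (1, c.2.1.1)] [:: (1, i)]) (SB w gam c.2.2) | q.2 == b) (c.1 * q.1)) (A c.2.1.2)).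
apply: rpred_sum => i _; apply: rpredZ; apply: hX; exact: hu.
Qed.
End S3.



Section S4.
Variables (K : fieldType) (n w : nat) (gam : K) (d : nat).
Variable A : Bidx n -> 'M[K]_d.
Variable delta : Coact K n d.
Hypothesis hYD : is_YD w gam A delta.
Variable X : {vspace 'cV[K]_d}.
Hypothesis hX : forall b u, u \in X -> A b *m u \in X.

Definition PP u := forall b, coefT (delta u) b \in X.

Lemma hlin : coact_linear delta.
Proof. by case: hYD => _ [] . Qed.

Lemma coef0 b : coefT (delta 0) b = 0.
Proof.
have := hlin 1 0 0 b; rewrite !scale1r addr0 => H.
set c := coefT (delta 0) b in H *; by rewrite -[LHS](addrK c c) -H subrr.
Qed.

Lemma PP0 : PP 0. Proof. by move=> b; rewrite coef0 rpred0. Qed.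

Lemma PPlin a u v : PP u -> PP v -> PP (a *: u + v).
Proof. by move=> hu hv b; rewrite hlin; apply: rpredD; [apply: rpredZ|]. Qed.

Lemma PPadd u v : PP u -> PP v -> PP (u + v).
Proof. by move=> hu hv; rewrite -[u]scale1r; apply: PPlin. Qed.

Lemma PPscale a u : PP u -> PP (a *: u).
Proof. by move=> hu; rewrite -[_ *: _]addr0; apply: PPlin => //; apply: PP0. Qed.

Lemma PPsum (I : Type) (r : seq I) (F : I -> 'cV[K]_d) :
  (forall i, PP (F i)) -> PP (\sum_(i <- r) F i).
Proof.
move=> hF; elim: r => [|x r IH]; first by rewrite big_nil; apply: PP0.
by rewrite big_cons; apply: PPadd.
Qed.

Lemma PPA b u : PP u -> PP (A b *m u).
Proof.
move=> hu b'; case: hYD => _ _ ->; exact: YDrhs_in.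
Qed.

Lemma PPact hh u : PP u -> PP (actH A hh u).
Proof.
move=> hu; rewrite /actH; apply: PPsum => e; apply: PPscale; exact: PPA.
Qed.

Lemma PPspan (s : seq 'cV[K]_d) : (forall x, x \in s -> PP x) ->
  forall u, u \in <<s>>%VS -> PP u.
Proof.
move=> hs u hu.
have := coord_span (X := in_tuple s) hu => ->.
apply: PPsum => i; apply: PPscale; apply: hs; apply: mem_nth.
exact: ltn_ord.
Qed.

Lemma YDsub_span (s : seq 'cV[K]_d) : X = <<s>>%VS -> (forall x, x \in s -> PP x) ->
  is_YDsub A delta X.
Proof.
move=> eX hs; split; first exact: hX.
by move=> u b hu; apply: (PPspan hs); rewrite -eX.
Qed.
End S4.



Section S5.
Variables (K : fieldType) (n w : nat) (gam : K) (d : nat).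
Hypothesis hn : (0 < n)%N.
Variable A : Bidx n -> 'M[K]_d.
Hypothesis hA : is_Hmodule w gam A.

Lemma inordK' (i : nat) : (i < n)%N -> ((inord i : 'I_(n.-1.+1)) : nat) = i.
Proof. by move=> hi; rewrite inordK // prednK. Qed.

Lemma mulB1 (b b' : Bidx n) : (b.1.1 + b'.1.1 < n)%N -> (b.1.2 + b'.1.2 < n)%N ->
  mulB w gam b b' = [:: (gam ^- (b.1.2 * b'.1.1) * 1,
     mkB n (b.1.1 + b'.1.1) (b.1.2 + b'.1.2) (b.2 + b'.2))].
Proof. by move=> h1 h2; rewrite /mulB /monoH h1 h2. Qed.

Lemma Amul (b b' : Bidx n) : (b.1.1 + b'.1.1 < n)%N -> (b.1.2 + b'.1.2 < n)%N ->
  A b *m A b' = gam ^- (b.1.2 * b'.1.1) *: A (mkB n (b.1.1 + b'.1.1) (b.1.2 + b'.1.2) (b.2 + b'.2)).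
Proof. by move=> h1 h2; rewrite hA.2 mulB1 // big_seq1 /= mulr1. Qed.

Lemma mkB_val (b : Bidx n) : mkB n b.1.1 b.1.2 b.2 = b.
Proof. by case: b => [[i j] k]; rewrite /mkB /= !inord_val. Qed.

Lemma AmkB i j k i' j' k' : (i + i' < n)%N -> (j + j' < n)%N ->
  A (mkB n i j k) *m A (mkB n i' j' k') =
  gam ^- (j * i') *: A (mkB n (i + i') (j + j') (k + k')).
Proof.
move=> h1 h2.
have hi : (i < n)%N by lia.
have hi' : (i' < n)%N by lia.
have hj : (j < n)%N by lia.
have hj' : (j' < n)%N by lia.
by rewrite Amul /= ?inordK' //.
Qed.

Lemma A1 : A (mkB n 0 0 0) = 1%:M.
Proof. by case: hA. Qed.

Lemma gam0 : gam ^- 0 = 1.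
Proof. by rewrite expr0 invr1. Qed.

Lemma Xadd k k' : A (mkB n 0 0 k) *m A (mkB n 0 0 k') = A (mkB n 0 0 (k + k')).
Proof. by rewrite AmkB // muln0 gam0 scale1r. Qed.

Variable v : 'cV[K]_d.

Lemma Xeig alpha : actH A (xH K n w) v = alpha *: v -> alpha != 0 ->
  forall k, exists c, A (mkB n 0 0 k) *m v = c *: v.
Proof.
move=> hx ha.
have h1 : A (mkB n 0 0 1) *m v = alpha *: v.
  by rewrite -hx /actH /xH /monoH hn big_seq1 /= scale1r.
have hpos : forall m : nat, exists c, A (mkB n 0 0 m%:Z) *m v = c *: v.
  elim=> [|m [c hc]]; first by exists 1; rewrite A1 mul1mx scale1r.
  exists (alpha * c).
  have -> : (m.+1)%:Z = 1 + m%:Z by lia.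
  by rewrite -Xadd -mulmxA hc -scalemxAr h1 scalerA mulrC.
have hm1 : A (mkB n 0 0 (-1)) *m v = alpha^-1 *: v.
  have : A (mkB n 0 0 (-1)) *m (A (mkB n 0 0 1) *m v) = v.
    by rewrite mulmxA Xadd addNr A1 mul1mx.
  rewrite h1 -scalemxAr => H.
  by rewrite -{2}H scalerA mulVf // scale1r.
case=> m; first exact: hpos.
elim: m => [|m [c hc]]; first by exists alpha^-1.
exists (alpha^-1 * c).
have -> : Negz m.+1 = -1 + Negz m by rewrite !NegzE; lia.
by rewrite -Xadd -mulmxA hc -scalemxAr hm1 scalerA mulrC.
Qed.

Lemma Geig beta : actH A (gH K n w) v = beta *: v ->
  forall j, (j < n)%N -> exists c, A (mkB n 0 j 0) *m v = c *: v.
Proof.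
move=> hg; elim=> [|j IH] hj; first by exists 1; rewrite A1 mul1mx scale1r.
have hn1 : (1 < n)%N by lia.
have [c hc] := IH (ltnW hj).
have h1 : A (mkB n 0 1 0) *m v = beta *: v.
  by rewrite -hg /actH /gH /monoH hn hn1 big_seq1 /= scale1r.
exists (beta * c).
have E : A (mkB n 0 j.+1 0) = A (mkB n 0 1 0) *m A (mkB n 0 j 0).
    by rewrite AmkB // muln0 gam0 scale1r add0n add1n addr0.
rewrite E.
by rewrite -mulmxA hc -scalemxAr h1 scalerA mulrC.
Qed.

Lemma Asplit0 j k : (j < n)%N ->
  A (mkB n 0 j k) = A (mkB n 0 j 0) *m A (mkB n 0 0 k).
Proof. by move=> hj; rewrite AmkB ?addn0 // add0r muln0 gam0 scale1r. Qed.

Lemma Asplit i j k : (i < n)%N -> (j < n)%N ->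
  A (mkB n i j k) = A (mkB n i 0 0) *m A (mkB n 0 j k).
Proof. by move=> hi hj; rewrite AmkB ?addn0 ?add0n // add0r mul0n gam0 scale1r. Qed.

Lemma Ypow : (1 < n)%N -> forall i, (i < n)%N ->
  A (mkB n i 0 0) = A (mkB n 1 0 0) ^+ i.
Proof.
move=> hn1; elim=> [|i IH] hi; first by rewrite A1 expr0.
rewrite exprS -mulmxE -IH ?(ltnW hi) // AmkB // ?add0n ?addr0 ?muln0 ?gam0 ?scale1r //.
Qed.

Lemma Ycomm j k : (1 < n)%N -> (j < n)%N ->
  A (mkB n 0 j k) *m A (mkB n 1 0 0) = gam ^- j *: (A (mkB n 1 0 0) *m A (mkB n 0 j k)).
Proof.
move=> hn1 hj.
rewrite AmkB ?add0n ?addn0 // AmkB ?add0n ?addn0 // muln1 mul0n gam0 scale1r.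
by rewrite addr0 add0r.
Qed.

Lemma yHact u : (1 < n)%N -> actH A (yH K n w) u = A (mkB n 1 0 0) *m u.
Proof. by move=> hn1; rewrite /actH /yH /monoH hn hn1 big_seq1 /= scale1r. Qed.

End S5.



Lemma span_closed (K : fieldType) (d : nat) (M : 'M[K]_d) (s : seq 'cV[K]_d) :
  (forall x, x \in s -> M *m x \in <<s>>%VS) ->
  forall u, u \in <<s>>%VS -> M *m u \in <<s>>%VS.
Proof.
move=> hs u hu.
rewrite (coord_span (X := in_tuple s) hu) mulmx_sumr.
apply: rpred_sum => i _; rewrite -scalemxAr; apply: rpredZ; apply: hs.
apply: mem_nth; exact: ltn_ord.
Qed.

Lemma CH_step (K : fieldType) (p : nat) (Y : 'M[K]_p.+1) :
  Y ^+ p.+1 = - \sum_(i < p.+1) (char_poly Y)`_i *: Y ^+ i.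
Proof.
have E : forall (c : K) i, horner_mx Y (c *: 'X^i) = c *: Y ^+ i.
  by move=> c i; rewrite linearZ /= rmorphXn /= horner_mx_X.
have H := Cayley_Hamilton Y.
rewrite -[in LHS](coefK (char_poly Y)) poly_def size_char_poly linear_sum /= in H.
move: H; rewrite big_ord_recr /= addrC => /eqP; rewrite addr_eq0 => /eqP.
rewrite E.
have -> : (char_poly Y)`_p.+1 = 1.
  by have := monicP (char_poly_monic Y); rewrite lead_coefE size_char_poly.
rewrite scale1r => ->; congr (- _); apply: eq_bigr => i _; exact: E.
Qed.

Theorem lemma3p5 (K : closedFieldType) (n w : nat) (gam : K) (p : nat)
  (hn : (0 < n)%N) (hw : (0 < w)%N) (hK : [pchar K] =i pred0)
  (hgam : n.-primitive_root gam)
  (A : Bidx n -> 'M[K]_p.+1) (delta : Coact K n p.+1)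
  (hV : @is_simple_YD K n w gam p.+1 A delta)
  (v : 'cV[K]_p.+1) (alpha beta : K) (h : Bidx n)
  (hv : @is_standard K n w p.+1 A delta v alpha beta h) :
  basis_of fullv [seq iter i (actH A (yH K n w)) v | i <- iota 0 p.+1].
Proof.
move: hV => [hYD _ hsimp].
move: hv => [[v0 a0 b0] [hh0 hx hg hcoef]].
have hA : is_Hmodule w gam A by case: hYD.
have PPv : forall X : {vspace 'cV[K]_p.+1}, v \in X -> PP delta X v.
  move=> X vX b; rewrite hcoef /coefT big_cons big_nil /=.
  by case: ifP => _; rewrite ?addr0 ?rpred0.
have PPit : forall X : {vspace 'cV[K]_p.+1},
    (forall b u, u \in X -> A b *m u \in X) -> v \in X ->
    forall i, PP delta X (iter i (actH A (yH K n w)) v).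
  move=> X hX vX; elim=> [|i IH] /=; first exact: PPv.
  exact: (PPact hYD hX).
have full : forall (X : {vspace 'cV[K]_p.+1}) (s : seq 'cV[K]_p.+1),
    (forall b u, u \in X -> A b *m u \in X) -> X = <<s>>%VS -> v \in X ->
    (forall x, x \in s -> PP delta X x) -> X = fullv.
  move=> X s hX eX vX hs.
  case: (hsimp X (YDsub_span hYD hX eX hs)) => // X0.
  by move: vX; rewrite X0 memv0 (negPf v0).
have dimf : \dim (fullv : {vspace 'cV[K]_p.+1}) = p.+1.
  by rewrite dimvf /= dim_matrix mulr1.
have bn : forall i : 'I_(n.-1.+1), (i < n)%N.
  by move=> i; have := ltn_ord i; lia.
have eig0 : forall j k, (j < n)%N -> exists c, A (mkB n 0 j k) *m v = c *: v.
  move=> j k hj; rewrite (Asplit0 hn hA) // -mulmxA.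
  have [c hc] := Xeig hn hA hx a0 k.
  have [c' hc'] := Geig hn hA hg hj.
  by exists (c * c'); rewrite hc -scalemxAr hc' scalerA.
case: (ltnP 1 n) => hn1; last first.
  have hX : forall b u, u \in <[v]>%VS -> A b *m u \in <[v]>%VS.
    move=> b u /vlineP [k ->]; rewrite -scalemxAr; apply: rpredZ.
    have -> : b = mkB n 0 0 b.2.
      rewrite -[b in LHS]mkB_val; congr mkB.
      - by have := bn b.1.1; lia.
      - by have := bn b.1.2; lia.
    have [c ->] := eig0 0%N b.2 hn.
    by apply: rpredZ; apply: memv_line.
  have H : <[v]>%VS = fullv.
    apply: (full _ [:: v] hX (esym (span_seq1 v)) (memv_line v)).
    by move=> x; rewrite inE => /eqP ->; apply: PPv; apply: memv_line.
  have := dim_vline v; rewrite H dimf v0 => -[p0]; subst p.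
  by rewrite /= /basis_of span_seq1 -H eqxx seq1_free v0.
set Y := A (mkB n 1 0 0).
have YY : forall a b, Y ^+ a *m Y ^+ b = Y ^+ (a + b).
  by move=> a b; rewrite exprD mulmxE.
have YS : forall i, Y *m Y ^+ i = Y ^+ i.+1.
  by move=> i; rewrite exprS mulmxE.
have iterY : forall i, iter i (actH A (yH K n w)) v = Y ^+ i *m v.
  elim=> [|i IH] /=; first by rewrite expr0 mul1mx.
  by rewrite IH yHact // -/Y mulmxA YS.
set s := [seq Y ^+ i *m v | i <- iota 0 p.+1].
have es : [seq iter i (actH A (yH K n w)) v | i <- iota 0 p.+1] = s.
  by apply: eq_map => i; exact: iterY.
rewrite es.
have ins : forall i, (i < p.+1)%N -> Y ^+ i *m v \in <<s>>%VS.
  move=> i hi; apply: memv_span; apply/mapP; exists i => //.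
  by rewrite mem_iota add0n.
have Ys : forall x, x \in s -> Y *m x \in <<s>>%VS.
  move=> x /mapP [i]; rewrite mem_iota add0n => /andP [_ hi] ->.
  rewrite mulmxA YS.
  case: (ltnP i p) => hip; first by apply: ins.
  have -> : i = p by lia.
  rewrite CH_step mulNmx mulmx_suml rpredN; apply: rpred_sum => j _.
  by rewrite -scalemxAl; apply: rpredZ; apply: ins.
have Ypin : forall m, Y ^+ m *m v \in <<s>>%VS.
  elim=> [|m IH]; first by apply: ins.
  rewrite -YS -mulmxA; exact: span_closed Ys _ IH.
have comm : forall j k i (u : 'cV[K]_p.+1), (j < n)%N ->
    A (mkB n 0 j k) *m (Y ^+ i *m u) = (gam ^- j) ^+ i *: (Y ^+ i *m (A (mkB n 0 j k) *m u)).
  move=> j k i u hj; elim: i u => [|i IH] u; first by rewrite !expr0 !mul1mx scale1r.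
  have E1 : A (mkB n 0 j k) *m (Y *m u) = gam ^- j *: (Y *m (A (mkB n 0 j k) *m u)).
    by rewrite mulmxA (Ycomm hn hA) // -scalemxAl -mulmxA.
  have -> : Y ^+ i.+1 = Y ^+ i *m Y by rewrite exprSr mulmxE.
  by rewrite -!mulmxA IH E1 -scalemxAr scalerA -exprSr mulmxA.
have hX : forall b u, u \in <<s>>%VS -> A b *m u \in <<s>>%VS.
  move=> b; apply: span_closed => x /mapP [i _ ->].
  rewrite -(mkB_val b) (Asplit hn hA) ?bn // (Ypow hn hA) ?bn // -mulmxA.
  rewrite comm ?bn //; have [c ->] := eig0 _ b.2 (bn b.1.2).
  by rewrite -!scalemxAr mulmxA YY; apply: rpredZ; apply: rpredZ.
have vin : v \in <<s>>%VS.
  by have := ins 0%N erefl; rewrite expr0 mul1mx.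
have XF : <<s>>%VS = fullv.
  apply: (full _ s hX erefl vin).
  move=> x /mapP [i _ ->]; rewrite -iterY; by apply: PPit.
by rewrite basisEdim XF subvv size_map size_iota dimf leqnn.
Qed.
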